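(* Let $\mathbf{Z}=\{Z_{\mathbf{u}}\}_{\mathbf{u}\in\mathbb{R}^2}$ be a max-stable random field with unit Fréchet margins $F(z)=\exp(-z^{-1})$, $z>0$. Let $\mathbf{x}=\{\mathbf{x}_1,\ldots,\mathbf{x}_k\}$ and $\mathbf{y}=\{\mathbf{y}_1,\ldots,\mathbf{y}_s\}$ be two disjoint sets of locations in $\mathbb{R}^2$, and put $M(\mathbf{x})=\bigvee_{i=1}^k Z_{\mathbf{x}_i}$, $M(\mathbf{y})=\bigvee_{j=1}^s Z_{\mathbf{y}_j}$. For $\alpha>0,\beta>0$ define the generalized madogram $$\nu^{\alpha,\beta}(\mathbf{x},\mathbf{y})=\tfrac12 E\left|F^{\alpha}(M(\mathbf{x}))-F^{\beta}(M(\mathbf{y}))\right|.$$ Define, for $z_1,\ldots,z_{k+s}>0$, $$G_{\mathbf{x},\mathbf{y}}(z_1,\ldots,z_{k+s})=P\Big(\bigcap_{i=1}^k\{Z_{\mathbf{x}_i}\le z_i\}\cap\bigcap_{j=1}^s\{Z_{\mathbf{y}_j}\le z_{k+j}\}\Big),\qquad V_{\mathbf{x},\mathbf{y}}=-\ln G_{\mathbf{x},\mathbf{y}},$$ and similarly $V_{\mathbf{x}}(z_1,\ldots,z_k)=-\ln P(Z_{\mathbf{x}_1}\le z_1,\ldots,Z_{\mathbf{x}_k}\le z_k)$ and $V_{\mathbf{y}}(z_1,\ldots,z_s)=-\ln P(Z_{\mathbf{y}_1}\le z_1,\ldots,Z_{\mathbf{y}_s}\le z_s)$. Then for all $\alpha,\beta>0$,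 $$\nu^{\alpha,\beta}(\mathbf{x},\mathbf{y})=\frac{V_{\mathbf{x},\mathbf{y}}(\alpha,\ldots,\alpha,\beta,\ldots,\beta)}{1+V_{\mathbf{x},\mathbf{y}}(\alpha,\ldots,\alpha,\beta,\ldots,\beta)}-c(\alpha,\beta),$$ where in $V_{\mathbf{x},\mathbf{y}}(\alpha,\ldots,\alpha,\beta,\ldots,\beta)$ the first $k$ arguments equal $\alpha$ and the last $s$ equal $\beta$, and $$c(\alpha,\beta)=\frac12\left(\frac{V_{\mathbf{x}}(1,\ldots,1)}{\alpha+V_{\mathbf{x}}(1,\ldots,1)}+\frac{V_{\mathbf{y}}(1,\ldots,1)}{\beta+V_{\mathbf{y}}(1,\ldots,1)}\right).$$
   Context: A max-stable random field with unit Fréchet margins has finite-dimensional distributions that are multivariate extreme value distributions of the form $G(z_1,\ldots,z_m)=\exp(-V(z_1,\ldots,z_m))$, where the dependence function $V$ is homogeneous of order $-1$: $V(a z_1,\ldots,a z_m)=a^{-1}V(z_1,\ldots,z_m)$ for $a>0$. *)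

(* Defs.v *)
From HB Require Import structures.
From mathcomp Require Import all_boot all_order all_algebra.
From mathcomp Require Import all_classical all_reals all_analysis.
Set Implicit Arguments. Unset Strict Implicit. Unset Printing Implicit Defensive.
Import Order.TTheory GRing.Theory Num.Theory.
Local Open Scope classical_set_scope.
Local Open Scope ring_scope.

Section MaxStable.
Context (d : measure_display) (T : measurableType d) (R : realType)
  (P : probability T R).

Variable Z : 'rV[R]_2 -> {RV P >-> R}.

Definition joint_cdf (n : nat) (locs : 'I_n -> 'rV[R]_2) (z : 'I_n -> R) : R :=
  fine (P [set w | forall i, Z (locs i) w <= z i]).

Definition Vfun (n : nat) (locs : 'I_n -> 'rV[R]_2) (z : 'I_n -> R) : R :=
  - ln (joint_cdf locs z).

Definition FrechetF (z : R) : R := if 0 < z then expR (- z^-1) else 0.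

(* max-stable random field with unit Frechet margins: margins are unit
   Frechet, and every finite-dimensional distribution is exp(-V) on the
   positive orthant with V homogeneous of order -1. *)
Definition max_stable_unit_frechet : Prop :=
  (forall u z, 0 < z -> P [set w | Z u w <= z] = (FrechetF z)%:E) /\
  (forall (n : nat) (locs : 'I_n -> 'rV[R]_2),
     exists V : ('I_n -> R) -> R,
       (forall z, (forall i, 0 < z i) ->
          P [set w | forall i, Z (locs i) w <= z i] = (expR (- V z))%:E) /\
       (forall (a : R) z, 0 < a -> (forall i, 0 < z i) ->
          V (fun i => a * z i) = a^-1 * V z)).

Definition Mmax (k : nat) (x : 'I_k.+1 -> 'rV[R]_2) (w : T) : R :=
  \big[Num.max/Z (x ord0) w]_(i < k.+1) Z (x i) w.

Definition madogram (a b : R) (k s : nat)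
  (x : 'I_k.+1 -> 'rV[R]_2) (y : 'I_s.+1 -> 'rV[R]_2) : \bar R :=
  ((2 : R)^-1)%:E *
  (\int[P]_w (`| FrechetF (Mmax x w) `^ a - FrechetF (Mmax y w) `^ b |)%:E)%E.

Definition catfam (A : Type) (m n : nat) (f : 'I_m -> A) (g : 'I_n -> A)
  (i : 'I_(m + n)) : A :=
  match fintype.split i with inl j => f j | inr j => g j end.

End MaxStable.

(* Main.v *)
Require Import Defs.
From HB Require Import structures.
From mathcomp Require Import all_boot all_order all_algebra.
From mathcomp Require Import all_classical all_reals all_analysis.
From mathcomp Require Import ring lra.
From mathcomp Require Import measurable_realfun.
Import Order.TTheory GRing.Theory Num.Theory.
Import numFieldNormedType.Exports.
Local Open Scope classical_set_scope.
Local Open Scope ring_scope.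

Section ftc01.
Context (R : realType).


Lemma cont_of_derive (g : R -> R) (x dg : R) : is_derive x 1 g dg -> {for x, continuous g}.
Proof.
move=> h; apply: differentiable_continuous; apply/derivable1_diffP.
exact: (@ex_derive _ _ _ x 1 g dg h).
Qed.

Lemma powR_cont_pt (p x : R) : 0 < x -> {for x, continuous (fun r : R => r `^ p)}.
Proof. move=> x0; apply: (@cont_of_derive _ x (p * x `^ (p - 1))); exact: is_derive1_powR. Qed.

Lemma powR_cvg0' (q : R) : 0 <= q -> (fun r : R => r `^ q) r @[r --> 0^'+] --> 0 `^ q.
Proof.
case: (eqVneq q 0) => [->|qn0] q0.
  have -> : (fun r : R => r `^ 0) = fun=> 1 by apply/funext => r; rewrite powRr0.
  rewrite powRr0; exact: cvg_cst.
rewrite powR0 //; apply: powR_cvg0; by rewrite lt_neqAle eq_sym qn0.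
Qed.

Lemma within01 (g : R -> R) : (forall x, 0 < x -> {for x, continuous g}) ->
  g r @[r --> 0^'+] --> g 0 -> {within `[0%R, 1%R], continuous g}.
Proof.
move=> hc h0; apply/continuous_within_itvP => //; split.
- move=> x; rewrite in_itv /= => /andP[x0 _]; exact: hc.
- exact: h0.
- apply: cvg_at_left_filter; exact: hc.
Qed.

Lemma int01 (p : R) : 0 <= p ->
  (\int[lebesgue_measure]_(r in `[0%R, 1%R]) (1 - r `^ p)%:E = (p / (p + 1))%:E)%E.
Proof.
move=> p0.
have p1 : 0 < p + 1 by rewrite ltr_wpDl.
pose F := fun r : R => r - (p + 1)^-1 * r `^ (p + 1).
have Fd : forall (x : R), 0 < x -> is_derive x 1 F (1 - (p + 1)^-1 * ((p + 1) * x `^ (p + 1 - 1))).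
  move=> x x0.
  have h1 : is_derive x 1 (fun r : R => (p + 1)^-1 * r `^ (p + 1)) ((p + 1)^-1 * ((p + 1) * x `^ (p + 1 - 1))).
    exact: (@is_deriveZ R R R (fun r => r `^ (p + 1)) ((p + 1)^-1) x 1 _ (is_derive1_powR (p + 1) x0)).
  exact: (@is_deriveB R R R (fun r => r) _ x 1 1 _ (is_derive_id x 1) h1).
have fd : forall (x : R), 0 < x -> is_derive x 1 (fun r => 1 - r `^ p) (0 - p * x `^ (p - 1)).
  move=> x x0.
  have h2 : is_derive x 1 (fun r : R => r `^ p) (p * x `^ (p - 1)) by exact: is_derive1_powR.
  have h1 : is_derive x 1 (fun=> 1 : R) 0 by exact: is_derive_cst.
  exact: (@is_deriveB R R R _ _ x 1 0 _ h1 h2).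
have F0 : F r @[r --> 0^'+] --> F 0.
  have h1 := @cvg_at_right_filter _ _ (fun r : R => r) 0 0 cvg_id.
  have h2 : (fun r : R => (p + 1)^-1 * r `^ (p + 1)) r @[r --> 0^'+] --> (p + 1)^-1 * 0 `^ (p + 1).
    exact: (cvgM (cvg_cst _) (@powR_cvg0' (p + 1) (ltW p1))).
  exact: (cvgB h1 h2).
have Fc : {within `[0%R, 1%R], continuous F}.
  apply: within01 => // x x0; exact: cont_of_derive (Fd x x0).
rewrite (@continuous_FTC2 _ _ F) //.
- rewrite /F powR1 powR0 ?gt_eqF // mulr0 subr0 -EFinB; congr EFin.
  by field; rewrite gt_eqF.
- apply: within01 => [x x0|]; first exact: cont_of_derive (fd x x0).
  have h2 : (fun r : R => (1 : R)) r @[r --> 0^'+] --> (1 : R) by exact: cvg_cst.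
  exact: (cvgB h2 (@powR_cvg0' p p0)).
- have [_ h0 h1] := (continuous_within_itvP F ltr01).1 Fc.
  split => //.
  move=> x; rewrite in_itv /= => /andP[x0 _]; exact: (@ex_derive _ _ _ x 1 F _ (Fd x x0)).
- move=> x; rewrite in_itv /= => /andP[x0 _].
  have Hd := Fd x x0.
  by rewrite derive1E derive_val mulKf ?gt_eqF // addrK.
Qed.
End ftc01.

Section layer.
Context d (T : measurableType d) (R : realType) (P : probability T R)
  (f : T -> R) (mf : measurable_fun setT f).
Definition frv := f.
HB.instance Definition _ := isMeasurableFun.Build _ _ _ _ frv mf.

Lemma layer_cake (f0 : forall w, 0 <= f w) :
  (\int[P]_w (f w)%:E = \int[lebesgue_measure]_(r in `[0%R, +oo[) ccdf (frv : {RV P >-> R}) r)%E.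
Proof.
have := @ge0_expectation_ccdf _ _ _ P frv f0.
by rewrite expectation_def.
Qed.

Lemma ccdfE r : ccdf (frv : {RV P >-> R}) r = P [set w | r < f w].
Proof.
rewrite /ccdf /distribution /pushforward /=.
congr (P _); apply/seteqP; split => w /=; by rewrite in_itv /= andbT.
Qed.

Lemma meas_le t : measurable [set w | f w <= t].
Proof.
have := @measurable_funPTI _ _ _ _ (frv : {mfun T >-> R}) _ (measurable_itv `]-oo, t]).
congr measurable; apply/seteqP; split => w /=; by rewrite in_itv /=.
Qed.

Lemma expect_pow (f0 : forall w, 0 <= f w) (f1 : forall w, f w <= 1) (p : R) :
  (forall t, 0 < t < 1 -> P [set w | f w <= t] = (t `^ p)%:E) ->
  (\int[P]_w (f w)%:E = (p / (p + 1))%:E)%E.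
Proof.
move=> hP.
have p0 : 0 <= p.
  have h20 : (0 : R) < 2^-1 by lra.
  have h21 : (2 : R)^-1 < 1 by rewrite invf_lt1 // ltr1n.
  have h2 : (0 : R) < (2 : R)^-1 < 1 by rewrite h20 h21.
  have := probability_le1 P (meas_le 2^-1).
  rewrite hP // lee_fin /powR gt_eqF // expR_le1 => h.
  have := ln_lt0 h2; nra.
have cE : forall r, 0 < r <= 1 -> ccdf (frv : {RV P >-> R}) r = (1 - r `^ p)%:E.
  move=> r /andP[r0 r1].
  rewrite ccdfE.
  have -> : [set w | r < f w] = ~` [set w | f w <= r].
    apply/seteqP; split => w /=; rewrite ltNge; [by move/negP | by move/negP].
  rewrite probability_setC; last exact: meas_le.
  have [r1'|r1e] := ltP r 1; last first.
    have -> : r = 1 by apply/eqP; rewrite eq_le r1 r1e.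
    rewrite (_ : [set w | f w <= 1] = setT) ?probability_setT; last first.
      by apply/seteqP; split => w //= _; exact: f1.
    by rewrite powR1 subrr subee.
  by rewrite hP ?r0 ?r1' // EFinB.
rewrite (layer_cake f0).
rewrite -integral_itv_obnd_cbnd; last first.
  apply: measurable_funS (ccdf_measurable _) => //.
rewrite (@itv_bndbnd_setU _ _ _ (BRight 1)) //.
rewrite ge0_integral_setU //; [ | apply: measurable_funS (ccdf_measurable _) => // |
  apply/eqP; apply/seteqP; split => // r [/=]; rewrite !in_itv /= => /andP[_ r1] /andP[r1' _];
    by move: (lt_le_trans r1' r1); rewrite ltxx ].
rewrite [X in (_ + X)%E]integral0_eq ?adde0; last first.
  move=> r /=; rewrite in_itv /= andbT => r1.
  rewrite ccdfE (_ : [set w | r < f w] = set0) ?measure0 //.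
  apply/seteqP; split => // w /= rw; have := f1 w; lra.
transitivity (\int[lebesgue_measure]_(r in `]0%R, 1%R]) (1 - r `^ p)%:E)%E.
  apply: eq_integral => r; rewrite inE /= in_itv /= => h; exact: cE.
rewrite integral_itv_obnd_cbnd; last first.
  apply/measurable_EFinP; apply: measurable_funB => //.
  exact: measurable_funS (measurable_powR _).
exact: int01.
by rewrite bnd_simp.
Qed.
End layer.

Section helpers.
Context (R : realType).

Lemma FrechetF_ge0 (z : R) : 0 <= FrechetF z.
Proof. rewrite /FrechetF; case: ifP => // _; exact: expR_ge0. Qed.

Lemma FrechetF_le1 (z : R) : FrechetF z <= 1.
Proof.
rewrite /FrechetF; case: ifP => // z0; rewrite expR_le1 oppr_le0.
by rewrite invr_ge0 ltW.
Qed.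

Lemma FrechetF_nd : nondecreasing_fun (@FrechetF R).
Proof.
move=> u v uv; rewrite /FrechetF.
case: ifP => u0; case: ifP => v0.
- rewrite ler_expR lerN2 lef_pV2 ?posrE //.
- by move: (lt_le_trans u0 uv); rewrite v0.
- exact: expR_ge0.
- by [].
Qed.

Lemma FrechetF_meas : measurable_fun setT (@FrechetF R).
Proof. apply: nondecreasing_measurable => //; exact: FrechetF_nd. Qed.

Lemma powF_ge0 (z a : R) : 0 <= FrechetF z `^ a.
Proof. exact: powR_ge0. Qed.

Lemma powF_le1 (z a : R) : 0 < a -> FrechetF z `^ a <= 1.
Proof.
move=> a0.
have := @ge0_ler_powR R a (ltW a0) (FrechetF z) 1.
rewrite powR1 => -> //; rewrite ?nnegrE ?FrechetF_ge0 ?FrechetF_le1 //.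
Qed.

Lemma powF_le (m a t : R) : 0 < a -> 0 < t < 1 ->
  (FrechetF m `^ a <= t) = (m <= a / (- ln t)).
Proof.
move=> a0 /andP[t0 t1].
have L0 : 0 < - ln t by rewrite oppr_gt0 ln_lt0 // t0 t1.
rewrite /FrechetF; case: ifP => m0.
- rewrite /powR gt_eqF ?expR_gt0 // expRK.
  rewrite -[t in LHS]lnK ?posrE // ler_expR.
  have mi : m * m^-1 = 1 by rewrite mulfV // gt_eqF.
  have mi0 : 0 < m^-1 by rewrite invr_gt0.
  rewrite ler_pdivlMr //.
  apply/idP/idP => h; nra.
- rewrite powR0 ?gt_eqF // ltW //.
  have : 0 < a / - ln t by rewrite divr_gt0.
  move: m0 => /negbT; rewrite -leNgt => m0 h; apply/esym/idP; lra.
Qed.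

End helpers.

Lemma absmax (R : realType) (u v : R) : `|u - v| + u + v = 2 * Num.max u v.
Proof.
case: (leP u v) => h.
- rewrite ler0_norm ?subr_le0 //; lra.
- rewrite gtr0_norm ?subr_gt0 //; lra.
Qed.

Lemma hsum_gen d (T : measurableType d) (R : realType) (P : probability T R) (U W : T -> R) :
  measurable_fun setT U -> measurable_fun setT W -> (forall w, 0 <= U w) -> (forall w, 0 <= W w) ->
 (\int[P]_w (`|U w - W w|)%:E + \int[P]_w (U w)%:E + \int[P]_w (W w)%:E =
   (2 : R)%:E * \int[P]_w (Num.max (U w) (W w))%:E)%E.
Proof.
move=> mU mW U0 W0.
have mA : measurable_fun setT (fun w => (`|U w - W w|)%:E).
  apply/measurable_EFinP; exact: (measurableT_comp (@normr_measurable R setT) (measurable_funB mU mW)).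
have mUE : measurable_fun setT (fun w => (U w)%:E) by exact/measurable_EFinP.
have mWE : measurable_fun setT (fun w => (W w)%:E) by exact/measurable_EFinP.
have mME : measurable_fun setT (fun w => (Num.max (U w) (W w))%:E).
  apply/measurable_EFinP; exact: measurable_maxr.
rewrite -ge0_integralD //; try solve [move=> w _; rewrite lee_fin ?normr_ge0 ?U0 ?W0 //].
rewrite -ge0_integralD //; try solve [move=> w _; rewrite ?lee_fin ?normr_ge0 ?U0 ?W0 //
  | move=> w _; rewrite adde_ge0 // lee_fin ?normr_ge0 ?U0 //
  | exact: emeasurable_funD mA mUE].
rewrite -ge0_integralZl_EFin //; try solve [move=> w _; rewrite lee_fin le_max ?U0 //].
by apply: eq_integral => w _; rewrite -!EFinD -EFinM absmax.
Qed.

Lemma div_aux (R : realType) (v a : R) : a != 0 -> (v / a) / (v / a + 1) = v / (a + v).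
Proof.
move=> a0; case: (eqVneq (a + v) 0) => h.
  have -> : v = - a by apply/eqP; rewrite -subr_eq0 opprK addrC h.
  by rewrite mulNr mulfV // addNr subrr !invr0 !mulr0.
field; apply/andP; split => //.
Qed.

Lemma final_step (R : realType) (I : \bar R) (Vxy Vx Vy a b : R) : a != 0 -> b != 0 ->
 (I + ((Vx / a) / (Vx / a + 1))%:E + ((Vy / b) / (Vy / b + 1))%:E = (2 : R)%:E * (Vxy / (Vxy + 1))%:E)%E ->
 (((2 : R)^-1)%:E * I = (Vxy / (1 + Vxy) - 2^-1 * (Vx / (a + Vx) + Vy / (b + Vy)))%:E)%E.
Proof.
move=> a0 b0; case: I => [r| |] //= h.
move: h => /(congr1 fine) /= h.
congr EFin.
have -> : r = 2 * (Vxy / (Vxy + 1)) - (Vx / a) / (Vx / a + 1) - (Vy / b) / (Vy / b + 1) by lra.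
rewrite !div_aux // [Vxy + 1]addrC.
move: (Vxy / (1 + Vxy)) (Vx / (a + Vx)) (Vy / (b + Vy)) => A B C.
by field.
Qed.

Section field.
Context d (T : measurableType d) (R : realType) (P : probability T R)
  (Z : 'rV[R]_2 -> {RV P >-> R}).

Lemma DL (n : nat) (locs : 'I_n -> 'rV[R]_2) (zz : 'I_n -> R) (c : R) :
  max_stable_unit_frechet Z -> (forall i, 0 < zz i) -> 0 < c ->
  P [set w | forall i, Z (locs i) w <= c * zz i] =
  (expR (- (c^-1 * Vfun Z locs zz)))%:E.
Proof.
move=> [_ hV] zz0 c0.
have [V [hP hH]] := hV n locs.
rewrite hP; last by move=> i; rewrite mulr_gt0.
by rewrite hH // /Vfun /joint_cdf hP //= expRK opprK.
Qed.

Lemma Mmax_meas (k : nat) (x : 'I_k.+1 -> 'rV[R]_2) :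
  measurable_fun setT (fun w => Mmax Z x w).
Proof.
rewrite /Mmax.
elim: (index_enum _) => [|i s IH].
  under eq_fun do rewrite big_nil.
  exact: measurable_funP.
under eq_fun do rewrite big_cons /=.
exact: (measurable_maxr (measurable_funP (Z (x i))) IH).
Qed.

Lemma Mmax_le (k : nat) (x : 'I_k.+1 -> 'rV[R]_2) w z :
  (Mmax Z x w <= z) <-> (forall i, Z (x i) w <= z).
Proof.
rewrite /Mmax; split.
  by move/bigmax_leP => [_ h] i; exact: h.
move=> h; apply/bigmax_leP; split => // i _; exact: h.
Qed.

Lemma catfam_all (m n : nat) (x : 'I_m -> 'rV[R]_2) (y : 'I_n -> 'rV[R]_2)
  (za : 'I_m -> R) (zb : 'I_n -> R) w c :
  (forall i, Z (catfam x y i) w <= c * catfam za zb i) <->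
  (forall i, Z (x i) w <= c * za i) /\ (forall j, Z (y j) w <= c * zb j).
Proof.
split.
  move=> h; split.
    move=> i; have := h (lshift n i); rewrite /catfam.
    by have := unsplitK (inl i : 'I_m + 'I_n); rewrite /= => ->.
  move=> j; have := h (rshift m j); rewrite /catfam.
  by have := unsplitK (inr j : 'I_m + 'I_n); rewrite /= => ->.
move=> [h1 h2] i; rewrite /catfam; case: (fintype.split i) => j; [exact: h1|exact: h2].
Qed.
End field.

Theorem proposition2p1 (d : measure_display) (T : measurableType d)
  (R : realType) (P : probability T R) (Z : 'rV[R]_2 -> {RV P >-> R})
  (k s : nat) (x : 'I_k.+1 -> 'rV[R]_2) (y : 'I_s.+1 -> 'rV[R]_2) :
  max_stable_unit_frechet Z ->
  (forall i j, x i != y j) ->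
  forall a b : R, 0 < a -> 0 < b ->
  let Vxy := Vfun Z (catfam x y) (catfam (fun _ => a) (fun _ => b)) in
  let Vx := Vfun Z x (fun _ => 1) in
  let Vy := Vfun Z y (fun _ => 1) in
  let c := 2^-1 * (Vx / (a + Vx) + Vy / (b + Vy)) in
  madogram Z a b x y = (Vxy / (1 + Vxy) - c)%:E.
Proof.
move=> hms _ a b a0 b0 Vxy Vx Vy c.
have gen : forall (k' : nat) (x' : 'I_k'.+1 -> 'rV[R]_2) (a' : R), 0 < a' ->
    forall t, 0 < t < 1 ->
    P [set w | FrechetF (Mmax Z x' w) `^ a' <= t] =
    (t `^ (Vfun Z x' (fun _ => 1) / a'))%:E.
  move=> k' x' a' a'0 t ht.
  have L0 : 0 < - ln t by rewrite oppr_gt0 ln_lt0.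
  have t0 : 0 < t by case/andP: ht.
  rewrite (_ : [set w | _] = [set w | forall i, Z (x' i) w <= (a' / - ln t) * 1]); last first.
    apply/seteqP; split => w /=; rewrite powF_le //.
      move=> h i; rewrite mulr1; exact: ((@Mmax_le _ _ _ _ Z _ x' w _).1 h).
    move=> h; apply/(@Mmax_le _ _ _ _ Z _ x' w _).2 => i; rewrite -[_ / _]mulr1; exact: h.
  rewrite DL //; last by rewrite divr_gt0.
  congr EFin; rewrite /powR gt_eqF //; congr expR; rewrite invf_div.
  field; by rewrite gt_eqF.
pose U := fun w => FrechetF (Mmax Z x w) `^ a.
pose W := fun w => FrechetF (Mmax Z y w) `^ b.
pose Mx := fun w => Num.max (U w) (W w).
have mU : measurable_fun setT U.
  exact: (measurableT_comp (measurable_powR a) (measurableT_comp (@FrechetF_meas R) (@Mmax_meas _ _ _ _ Z _ x))).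
have mW : measurable_fun setT W.
  exact: (measurableT_comp (measurable_powR b) (measurableT_comp (@FrechetF_meas R) (@Mmax_meas _ _ _ _ Z _ y))).
have mM : measurable_fun setT Mx by exact: measurable_maxr mU mW.
have U0 : forall w, 0 <= U w by move=> w; exact: powF_ge0.
have W0 : forall w, 0 <= W w by move=> w; exact: powF_ge0.
have U1 : forall w, U w <= 1 by move=> w; exact: powF_le1.
have W1 : forall w, W w <= 1 by move=> w; exact: powF_le1.
have M0 : forall w, 0 <= Mx w by move=> w; rewrite /Mx le_max U0.
have M1 : forall w, Mx w <= 1 by move=> w; rewrite /Mx ge_max U1 W1.
have EU := @expect_pow _ _ _ P U mU U0 U1 _ (gen _ x a a0).
have EW := @expect_pow _ _ _ P W mW W0 W1 _ (gen _ y b b0).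
have hM : forall t, 0 < t < 1 -> P [set w | Mx w <= t] = (t `^ Vxy)%:E.
  move=> t ht.
  have L0 : 0 < - ln t by rewrite oppr_gt0 ln_lt0.
  have t0 : 0 < t by case/andP: ht.
  rewrite (_ : [set w | _] = [set w | forall i, Z (catfam x y i) w <= (- ln t)^-1 * catfam (fun _ => a) (fun _ => b) i]); last first.
    apply/seteqP; split => w /=.
      rewrite /Mx ge_max => /andP[hu hv].
      rewrite /U (powF_le _ _ _ _ a0 ht) in hu; rewrite /W (powF_le _ _ _ _ b0 ht) in hv.
      apply/catfam_all; split => i; rewrite mulrC.
        exact: ((@Mmax_le _ _ _ _ Z _ x w _).1 hu i).
      exact: ((@Mmax_le _ _ _ _ Z _ y w _).1 hv i).
    move/catfam_all => [h1 h2]; rewrite /Mx ge_max; apply/andP; split.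
      rewrite /U (powF_le _ _ _ _ a0 ht); apply/(@Mmax_le _ _ _ _ Z _ x w _).2 => i; by rewrite mulrC.
    rewrite /W (powF_le _ _ _ _ b0 ht); apply/(@Mmax_le _ _ _ _ Z _ y w _).2 => i; by rewrite mulrC.
  rewrite DL //; last 2 first.
  - by move=> i; rewrite /catfam; case: (fintype.split i).
  - by rewrite invr_gt0.
  congr EFin; rewrite /powR gt_eqF // invrK; congr expR.
  rewrite /Vxy; lra.
have EM := @expect_pow _ _ _ P Mx mM M0 M1 _ hM.
have EM' : (\int[P]_w (Num.max (U w) (W w))%:E = (Vxy / (Vxy + 1))%:E)%E := EM.
have hsum := @hsum_gen _ _ _ P U W mU mW U0 W0.
rewrite EU EW EM' in hsum.
rewrite /madogram.
have hfin := @final_step R _ _ _ _ a b (negbT (gt_eqF a0)) (negbT (gt_eqF b0)) hsum.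
exact hfin.
Qed.
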